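(* Let $\Gamma=(V,E)$ be a reflexive, locally finite graph with $|V|\ge 2k-1$. Let $X$ be a $k$-fragment of $\Gamma$ and let $Y$ be a negative $k$-fragment (a $k$-fragment of $\Gamma^{-1}$) such that $|Y|\ge |X|$ and $|X\cap Y^{\curlyvee}|\ge k$. Then $X\cap Y^{\curlyvee}$ is a $k$-fragment of $\Gamma$. In particular, if $X$ is a $k$-atom, then $X\subseteq Y^{\curlyvee}$.
   Context: A graph is a pair $\Gamma=(V,E)$ with $E\subseteq V\times V$; reflexive means $(x,x)\in E$ for all $x$; locally finite means each $\Gamma(x)=\{y:(x,y)\in E\}$ is finite. For $A\subseteq V$: $\Gamma(A)=\bigcup_{x\in A}\Gamma(x)$, $\partial(A)=\Gamma(A)\setminus A$; $\Gamma^{-1}=(V,E^{-1})$, $E^{-1}=\{(x,y):(y,x)\in E\}$; $A^{\curlyvee}=V\setminus(A\cup\Gamma^{-1}(A))$. $\Gamma$ is $k$-separable if some finite $X$ has $|X|\ge k$ and $|V\setminus\Gamma(X)|\ge k$; then $\kappa_k(\Gamma)=\min\{|\partial(X)|: X\text{ finite}, |X|\ge k, |V\setminus\Gamma(X)|\ge k\}$, a $k$-fragment is a finite $X$ with $|X|\ge k$, $|V\setminus\Gamma(X)|\ge k$, $|\partial(X)|=\kappa_k(\Gamma)$, and a $k$-atom is a $k$-fragment of minimum cardinality. If $\Gamma$ is not $k$-separable and $|V|\ge 2k-1$, by convention $\kappa_k(\Gamma)=|V|-2k+1$ and every $k$-element subset is a $k$-fragment and a $k$-atom. Negative fragments/atoms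 are those of $\Gamma^{-1}$. *)

(* Defs.v *)
(* the vertex set may be infinite, so subsets are predicates
   V -> Prop and cardinalities are expressed with duplicate-free lists. *)
From Stdlib Require Import List Arith.
Import ListNotations.
Set Implicit Arguments.

Section Graphs.
Variable V : Type.

Definition reflexive (E : V -> V -> Prop) : Prop := forall x, E x x.

Definition finite (A : V -> Prop) : Prop :=
  exists l : list V, forall x, A x -> In x l.

Definition card_eq (A : V -> Prop) (n : nat) : Prop :=
  exists l : list V, NoDup l /\ length l = n /\ (forall x, A x <-> In x l).

Definition card_ge (A : V -> Prop) (k : nat) : Prop :=
  exists l : list V, NoDup l /\ length l = k /\ (forall x, In x l -> A x).

Definition locally_finite (E : V -> V -> Prop) : Prop :=
  forall x, finite (fun y => E x y).

Definition nbhd (E : V -> V -> Prop) (A : V -> Prop) : V -> Prop :=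
  fun y => exists x, A x /\ E x y.

Definition boundary (E : V -> V -> Prop) (A : V -> Prop) : V -> Prop :=
  fun y => nbhd E A y /\ ~ A y.

Definition inv (E : V -> V -> Prop) : V -> V -> Prop := fun x y => E y x.

Definition vee (E : V -> V -> Prop) (A : V -> Prop) : V -> Prop :=
  fun y => ~ A y /\ ~ nbhd (inv E) A y.

Definition inter (A B : V -> Prop) : V -> Prop := fun x => A x /\ B x.

Definition k_sep_set (E : V -> V -> Prop) (k : nat) (X : V -> Prop) : Prop :=
  finite X /\ card_ge X k /\ card_ge (fun y => ~ nbhd E X y) k.

Definition k_separable (E : V -> V -> Prop) (k : nat) : Prop :=
  exists X, k_sep_set E k X.

Definition kappa (E : V -> V -> Prop) (k c : nat) : Prop :=
  (k_separable E k /\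
     (exists X, k_sep_set E k X /\ card_eq (boundary E X) c) /\
     (forall X m, k_sep_set E k X -> card_eq (boundary E X) m -> c <= m))
  \/
  (~ k_separable E k /\
     exists n, card_eq (fun _ => True) n /\ 2 * k - 1 <= n /\ c = n - (2 * k - 1)).

Definition fragment (E : V -> V -> Prop) (k : nat) (X : V -> Prop) : Prop :=
  (k_separable E k /\ k_sep_set E k X /\
     exists c, kappa E k c /\ card_eq (boundary E X) c)
  \/
  (~ k_separable E k /\ card_ge (fun _ => True) (2 * k - 1) /\ card_eq X k).

Definition atom (E : V -> V -> Prop) (k : nat) (X : V -> Prop) : Prop :=
  fragment E k X /\
  exists n, card_eq X n /\
    (forall Y m, fragment E k Y -> card_eq Y m -> n <= m).

End Graphs.

(* Main.v *)
Require Import Defs.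
From Stdlib Require Import List Arith ClassicalEpsilon Classical Lia.
Import ListNotations.
Set Implicit Arguments.

Section L.
Variable V : Type.
Definition dec (P : Prop) : bool := if excluded_middle_informative P then true else false.
Lemma dec_true (P : Prop) : dec P = true <-> P.
Proof. unfold dec; destruct (excluded_middle_informative P); split; intuition discriminate. Qed.
Definition eqd : forall x y : V, {x = y} + {x <> y} := fun x y => excluded_middle_informative (x = y).

Lemma card_unique (A : V -> Prop) n m : card_eq A n -> card_eq A m -> n = m.
Proof.
  intros [l1 [N1 [L1 H1]]] [l2 [N2 [L2 H2]]].
  assert (length l1 <= length l2) by (apply NoDup_incl_length; auto; intros x Hx; apply H2, H1, Hx).
  assert (length l2 <= length l1) by (apply NoDup_incl_length; auto; intros x Hx; apply H1, H2, Hx).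
  lia.
Qed.

Lemma card_sub (A B : V -> Prop) n m : card_eq A n -> card_eq B m -> (forall x, A x -> B x) -> n <= m.
Proof.
  intros [l1 [N1 [L1 H1]]] [l2 [N2 [L2 H2]]] S. subst.
  apply NoDup_incl_length; auto; intros x Hx; apply H2, S, H1, Hx.
Qed.

Lemma card_split (A : V -> Prop) n (P : V -> Prop) : card_eq A n ->
  exists a b, card_eq (fun x => A x /\ P x) a /\ card_eq (fun x => A x /\ ~ P x) b /\ n = a + b.
Proof.
  intros [l [N [L H]]].
  exists (length (filter (fun x => dec (P x)) l)), (length (filter (fun x => negb (dec (P x))) l)).
  split; [|split].
  - exists (filter (fun x => dec (P x)) l); split; [apply NoDup_filter; auto| split; [reflexivity|]].
    intro x; rewrite filter_In, dec_true, <- H; tauto.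
  - exists (filter (fun x => negb (dec (P x))) l); split; [apply NoDup_filter; auto| split; [reflexivity|]].
    intro x; rewrite filter_In, <- H. rewrite Bool.negb_true_iff.
    unfold dec; destruct (excluded_middle_informative (P x)); intuition discriminate.
  - rewrite filter_length; auto.
Qed.

Lemma card_of_finite (A : V -> Prop) : finite A -> exists n, card_eq A n.
Proof.
  intros [l H].
  assert (C : card_eq (fun x => In x l) (length (nodup eqd l))).
  { exists (nodup eqd l); split; [apply NoDup_nodup|split; auto].
    intro x; rewrite nodup_In; tauto. }
  destruct (card_split A C) as [a [b [Ca _]]].
  exists a. destruct Ca as [l' [N [Lg Hl]]]. exists l'; split; auto; split; auto.
  intro x; rewrite <- Hl; firstorder.
Qed.

Lemma card_ext (A B : V -> Prop) n : (forall x, A x <-> B x) -> card_eq A n -> card_eq B n.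
Proof. intros E [l [N [L H]]]; exists l; split; auto; split; auto; intro x; rewrite <- E; auto. Qed.

Lemma card_ge_le (A : V -> Prop) k n : card_ge A k -> card_eq A n -> k <= n.
Proof.
  intros [l1 [N1 [L1 H1]]] [l2 [N2 [L2 H2]]]. subst.
  apply NoDup_incl_length; auto; intros x Hx; apply H2, H1, Hx.
Qed.

Lemma nodup_prefix (l : list V) k : NoDup l -> k <= length l ->
  exists l', NoDup l' /\ length l' = k /\ incl l' l.
Proof.
  revert k; induction l as [|a l IH]; intros k N Hk.
  - exists []; simpl in *; split; [constructor|split; [lia| intros x []]].
  - destruct k. exists []; split; [constructor|split; [auto| intros x []]].
    inversion N; subst. destruct (IH k) as [l' [N' [L' I']]]; simpl in *; auto; try lia.
    exists (a :: l'); split; [constructor; auto|split; simpl; auto].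
    intros x [->|Hx]; simpl; auto.
Qed.

Lemma card_ge_of_eq (A : V -> Prop) k n : card_eq A n -> k <= n -> card_ge A k.
Proof.
  intros [l [N [L H]]] Hk. subst. destruct (nodup_prefix N Hk) as [l' [N' [L' I']]].
  exists l'; split; auto; split; auto; intros x Hx; apply H, I', Hx.
Qed.

Lemma card_ge_mono (A B : V -> Prop) k : card_ge A k -> (forall x, A x -> B x) -> card_ge B k.
Proof. intros [l [N [L H]]] S; exists l; auto. Qed.

Lemma card_sub_eq (A B : V -> Prop) n : card_eq A n -> card_eq B n -> (forall x, B x -> A x) -> forall x, A x -> B x.
Proof.
  intros [l1 [N1 [L1 H1]]] [l2 [N2 [L2 H2]]] S x Ax.
  apply H2. apply (NoDup_length_incl (l' := l1) N2); [lia| |].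
  - intros y Hy; apply H1, S, H2, Hy.
  - apply H1, Ax.
Qed.

Lemma finite_sub (A B : V -> Prop) : finite B -> (forall x, A x -> B x) -> finite A.
Proof. intros [l H] S; exists l; auto. Qed.

Lemma fragment_ext (E : V -> V -> Prop) k (A B : V -> Prop) : (forall x, A x <-> B x) -> fragment E k A -> fragment E k B.
Proof.
  intros Eq F.
  assert (NB : forall y, nbhd E A y <-> nbhd E B y) by (intro y; unfold nbhd; firstorder).
  assert (BD : forall y, boundary E A y <-> boundary E B y) by (intro y; unfold boundary; rewrite NB, Eq; tauto).
  assert (KS : k_sep_set E k A -> k_sep_set E k B).
  { intros [[l Hl] [G1 G2]]. split; [exists l; firstorder|split].
    - apply card_ge_mono with (1 := G1); firstorder.
    - apply card_ge_mono with (1 := G2); intros y H1 H2; apply H1, NB, H2. }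
  destruct F as [[S [K [c [Kc Cc]]]]|[NS [G Ck]]].
  - left; split; auto; split; auto. exists c; split; auto. eapply card_ext; [exact BD|exact Cc].
  - right; split; auto; split; auto. eapply card_ext; [exact Eq|exact Ck].
Qed.
End L.
Section M.
Variable V : Type.
Lemma card_finite (A : V -> Prop) n : card_eq A n -> finite A.
Proof. intros [l [_ [_ H]]]; exists l; intro x; apply H. Qed.
Lemma finite_union (A B : V -> Prop) : finite A -> finite B -> finite (fun x => A x \/ B x).
Proof. intros [l1 H1] [l2 H2]; exists (l1 ++ l2); intros x [H|H]; apply in_or_app; auto. Qed.
End M.

Theorem mainTheorem5 (V : Type) (E : V -> V -> Prop) (k : nat)
  (X Y : V -> Prop)
  (hk : 1 <= k)
  (hrefl : reflexive E) (hlf : locally_finite E)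
  (hV : card_ge (fun _ : V => True) (2 * k - 1))
  (hX : fragment E k X) (hY : fragment (inv E) k Y)
  (hXY : exists nx ny, card_eq X nx /\ card_eq Y ny /\ nx <= ny)
  (hI : card_ge (inter X (vee E Y)) k) :
  fragment E k (inter X (vee E Y)) /\
  (atom E k X -> forall x, X x -> vee E Y x).
Proof.
  set (Z := inter X (vee E Y)).
  assert (ZX : forall x, Z x -> X x) by (unfold Z, inter; tauto).
  destruct hXY as [nx [ny [CX [CY Hle]]]].
  assert (FZ : finite Z) by (apply finite_sub with (B := X); [eapply card_finite; eauto | auto]).
  destruct (card_of_finite FZ) as [z CZ].
  assert (kz : k <= z) by (eapply card_ge_le; eauto).
  assert (zx : z <= nx) by (eapply card_sub; eauto).
  assert (F : fragment E k Z).
  { assert (EQ : z = nx -> fragment E k Z).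
    { intro Hz; subst z. apply fragment_ext with (A := X); auto.
      intro x; split; auto. apply (card_sub_eq CX CZ ZX). }
    destruct hX as [[SX [KSX [c [Kc Cc]]]] | [NS [_ CXk]]].
    2:{ apply EQ. pose proof (card_unique CX CXk). lia. }
    destruct Kc as [[_ [_ Min]] | [NS _]]; [|contradiction].
    destruct hY as [[SY [KSY [c' [Kc' Cc']]]] | [NSY [_ CYk]]].
    2:{ apply EQ. pose proof (card_unique CY CYk). lia. }
    destruct Kc' as [[_ [_ Min']] | [NS _]]; [|contradiction].
    destruct (card_split Y Cc) as [p [q [Cp [Cq Hpq]]]].
    destruct (card_split X Cc') as [r [s [Cr [Cs Hrs]]]].
    destruct (card_split Y CX) as [a1 [b1 [Ca1 [Cb1 H1]]]].
    destruct (card_split (nbhd (inv E) Y) Cb1) as [r1 [z1 [Cr1 [Cz1 H1']]]].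
    destruct (card_split X CY) as [a2 [b2 [Ca2 [Cb2 H2]]]].
    destruct (card_split (nbhd E X) Cb2) as [p1 [w [Cp1 [Cw H2']]]].
    assert (a1 = a2).
    { apply (card_unique Ca1). eapply card_ext; [|exact Ca2]. simpl; tauto. }
    assert (z = z1).
    { apply (card_unique CZ). eapply card_ext; [|exact Cz1]. unfold Z, inter, vee; tauto. }
    assert (r <= r1).
    { eapply card_sub; [exact Cr|exact Cr1|]. unfold boundary; tauto. }
    assert (p1 <= p).
    { eapply card_sub; [exact Cp1|exact Cp|]. unfold boundary; tauto. }
    assert (KSZ : k_sep_set E k Z).
    { split; auto. split; auto. destruct KSX as [_ [_ G]].
      apply card_ge_mono with (1 := G). unfold nbhd; firstorder. }
    assert (FbZ : finite (boundary E Z)).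
    { apply finite_sub with (B := fun a => boundary E X a \/ X a).
      - apply finite_union; eapply card_finite; eauto.
      - intros a [[x [Zx Exa]] Na]. destruct (classic (X a)); auto.
        left; split; auto; exists x; auto. }
    destruct (card_of_finite FbZ) as [zb Czb].
    pose proof (Min _ _ KSZ Czb) as czb.
    destruct (card_split X Czb) as [zi [zo [Czi [Czo Hz]]]].
    assert (zi <= r).
    { eapply card_sub; [exact Czi|exact Cr|].
      intros a [[[x [Zx Exa]] Na] Xa]. unfold Z, inter, vee in Zx, Na.
      assert (~ Y a) by (intro Ya; apply (proj2 (proj2 Zx)); exists a; split; auto).
      split; auto. split; auto. apply NNPP; intro; apply Na; tauto. }
    assert (zo <= q).
    { eapply card_sub; [exact Czo|exact Cq|].
      intros a [[[x [Zx Exa]] Na] Xa]. unfold Z, inter, vee in Zx, Na.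
      assert (~ Y a) by (intro Ya; apply (proj2 (proj2 Zx)); exists a; split; auto).
      split; auto. split; auto. exists x; split; auto. }
    assert (zb <= c).
    { destruct (le_lt_dec p r) as [Hpr|Hpr]; [|lia].
      set (W := fun a => Y a /\ ~ nbhd E X a).
      assert (CW : card_eq W w).
      { eapply card_ext; [|exact Cw]. intro a; unfold W; split; [tauto|].
        intros [Ya Na]; repeat split; auto. intro Xa; apply Na; exists a; split; auto. }
      assert (KSW : k_sep_set (inv E) k W).
      { split; [eapply card_finite; eauto|]. split; [apply card_ge_of_eq with (1 := CW); lia|].
        destruct KSY as [_ [_ G]]. apply card_ge_mono with (1 := G).
        unfold W, nbhd; firstorder. }
      assert (FbW : finite (boundary (inv E) W)).
      { apply finite_sub with (B := fun a => boundary (inv E) Y a \/ Y a).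
        - apply finite_union; eapply card_finite; eauto.
        - intros a [[x [Wx Exa]] Na]. destruct (classic (Y a)); auto.
          left; split; auto; exists x; split; auto. apply Wx. }
      destruct (card_of_finite FbW) as [wb Cwb].
      pose proof (Min' _ _ KSW Cwb) as cwb.
      destruct (card_split Y Cwb) as [wi [wo [Cwi [Cwo Hw]]]].
      assert (wi <= p).
      { eapply card_sub; [exact Cwi|exact Cp|].
        intros a [[[x [Wx Exa]] Na] Ya]. unfold W in Wx, Na. unfold inv in Exa.
        assert (~ X a) by (intro Xa; apply (proj2 Wx); exists a; split; auto).
        split; auto. split; auto. apply NNPP; intro; apply Na; tauto. }
      assert (wo <= s).
      { eapply card_sub; [exact Cwo|exact Cs|].
        intros a [[[x [Wx Exa]] Na] Ya]. unfold W in Wx, Na. unfold inv in Exa.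
        assert (~ X a) by (intro Xa; apply (proj2 Wx); exists a; split; auto).
        split; auto. split; auto. exists x; split; auto. apply Wx. }
      lia. }
    left; split; auto; split; auto. exists c; split.
    - left; split; auto; split; auto. exists X; split; auto.
    - replace c with zb by lia; auto. }
  split; auto.
  intros [_ [n [Cn Mn]]] x Xx.
  pose proof (Mn _ _ F CZ). pose proof (card_unique CX Cn).
  assert (z = nx) by lia. subst z.
  assert (Hz : Z x) by (apply (card_sub_eq CX CZ ZX); auto).
  apply Hz.
Qed.
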